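(* Fix a dimension $d\ge1$ and a constant $c\ge 1$. The intersection graph of any $n$ objects in $\mathbb{R}^d$ forming a $c$-fat collection admits a $3$-hop spanner of size $O(n\log n)$, where the constant in the $O(\cdot)$ depends only on $d$ and $c$.
   Context: Objects are bounded subsets of $\mathbb{R}^d$. The side length of an object is the side length of its smallest enclosing axis-aligned hypercube. A collection of objects is $c$-fat if for every axis-aligned hypercube $\gamma$ with side length $\ell$, there exist $c$ points that together hit (i.e., lie in) all objects of the collection that intersect $\gamma$ and have side length at least $\ell$. The intersection graph has the objects as vertices, with an edge between two objects iff they intersect. For a graph $G$ and integer $t\ge1$, a $t$-hop spanner is a subgraph $\widehat{G}$ of $G$ on the same vertex set such that for every edge $uv\in E(G)$ there is a $u$–$v$ path in $\widehat{G}$ with at most $t$ edges; its size is its number of edges. *)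

(* Defs.v *)
From HB Require Import structures.
From mathcomp Require Import all_boot all_order all_algebra.
From mathcomp Require Import all_classical all_reals all_analysis.
Set Implicit Arguments. Unset Strict Implicit. Unset Printing Implicit Defensive.
Import Order.TTheory GRing.Theory Num.Theory.
Local Open Scope classical_set_scope.
Local Open Scope ring_scope.

Definition pt (R : realType) (d : nat) := 'I_d -> R.

Definition cube (R : realType) (d : nat) (a : pt R d) (l : R) : set (pt R d) :=
  [set x | forall k : 'I_d, a k <= x k <= a k + l].

Definition bounded_obj (R : realType) (d : nat) (O : set (pt R d)) : Prop :=
  exists M : R, forall x, O x -> forall k : 'I_d, `|x k| <= M.

(* Side length: side of the smallest enclosing axis-aligned hypercube
   (infimum of sides of enclosing hypercubes; attained for bounded nonempty
   sets; 0 for the empty set). *)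
Definition sidelen (R : realType) (d : nat) (O : set (pt R d)) : R :=
  inf [set l : R | 0 <= l /\ exists a : pt R d, O `<=` cube a l].

Definition fat_collection (R : realType) (d c n : nat) (O : 'I_n -> set (pt R d)) : Prop :=
  forall (a : pt R d) (l : R), 0 <= l ->
    exists p : 'I_c -> pt R d,
      forall i : 'I_n, O i `&` cube a l !=set0 -> l <= sidelen (O i) ->
        exists j : 'I_c, O i (p j).

Definition igraph_edge (R : realType) (d n : nat) (O : 'I_n -> set (pt R d))
  (u v : 'I_n) : Prop := u != v /\ O u `&` O v !=set0.

(* A subgraph given by a set S of (oriented) edges; adjacency is symmetric.
   Its number of (undirected) edges is at most #|S|. *)
Definition sadj (n : nat) (S : {set 'I_n * 'I_n}) : rel 'I_n :=
  fun u v => ((u, v) \in S) || ((v, u) \in S).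

Definition hop_spanner (R : realType) (d n : nat) (O : 'I_n -> set (pt R d))
  (t : nat) (S : {set 'I_n * 'I_n}) : Prop :=
  (forall u v : 'I_n, (u, v) \in S -> igraph_edge O u v) /\
  (forall u v : 'I_n, igraph_edge O u v ->
     exists s : seq 'I_n, (size s <= t)%N /\ path (sadj S) u s /\ last u s = v).

(* Main.v *)
Require Import Defs.
From HB Require Import structures.
From mathcomp Require Import all_boot all_order all_algebra.
From mathcomp Require Import all_classical all_reals all_analysis.
From mathcomp Require Import zify ring lra.
Import Order.TTheory GRing.Theory Num.Theory.
Local Open Scope classical_set_scope.
Local Open Scope ring_scope.
Set Implicit Arguments. Unset Strict Implicit. Unset Printing Implicit Defensive.

Section Gen.
Variable R : realType.
Variable d : nat.

Lemma sidelen_ge0 (U : set (pt R d)) : 0 <= sidelen U.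
Proof.
rewrite /sidelen.
case: (pselect ([set l : R | 0 <= l /\ exists a, U `<=` cube a l] !=set0)) => [ne|e].
- by apply: lb_le_inf => // l [].
- have -> : [set l : R | 0 <= l /\ exists a : pt R d, U `<=` cube a l] = set0.
    by apply/seteqP; split=> l //= hl; apply: e; exists l.
  by rewrite inf0.
Qed.

Lemma sidelen_diff (U : set (pt R d)) : bounded_obj U ->
  forall x y, U x -> U y -> forall i, `|x i - y i| <= sidelen U.
Proof.
move=> [M hM] x y Ux Uy i; rewrite /sidelen; apply: lb_le_inf.
  exists (2 * `|M|); split; first by rewrite mulr_ge0 // normr_ge0.
  exists (fun _ => - `|M|) => z Uz k /=.
  have := hM z Uz k; have := ler_norm M; rewrite ler_norml => h1 /andP[h2 h3].
  apply/andP; split; lra.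
move=> l [l0 [a sub]].
have /andP[h1 h2] := sub x Ux i; have /andP[h3 h4] := sub y Uy i.
rewrite ler_norml; apply/andP; split; lra.
Qed.

End Gen.


Section Floor.
Variable R : realType.

Lemma floor_half (a : R) :
  (2 * Num.floor (a / 2) <= Num.floor a <= 2 * Num.floor (a / 2) + 1)%R.
Proof.
set q := Num.floor (a / 2).
have h1 := floor_le (a / 2); have h2 := floorD1_gt (a / 2).
rewrite -/q in h1 h2.
apply/andP; split.
  rewrite floor_ge_int intrM /=. 
  have -> : (2%:~R : R) = 2 by [].
  lra.
rewrite -ltzD1 floor_lt_int !intrD intrM.
have -> : (2%:~R : R) = 2 by [].
rewrite intrD in h2.
lra.
Qed.

Lemma floor_half_eq (a b : R) : Num.floor a = Num.floor b ->
  Num.floor (a / 2) = Num.floor (b / 2).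
Proof.
move=> e; have := floor_half a; have := floor_half b; rewrite e; lia.
Qed.

Lemma floor_half_bit (a : R) :
  (Num.floor a - 2 * Num.floor (a / 2) == 0) || (Num.floor a - 2 * Num.floor (a / 2) == 1).
Proof. have := floor_half a; lia. Qed.

Lemma floor_eq_close (a b : R) : Num.floor a = Num.floor b -> `|a - b| < 1.
Proof.
move=> e; have := floor_le a; have := floorD1_gt a; have := floor_le b; have := floorD1_gt b.
rewrite e intrD => h1 h2 h3 h4; rewrite ltr_norml; apply/andP; split; lra.
Qed.

Lemma floor_close (a b : R) (k : int) : `|a - b| < k%:~R -> 
  (Num.floor a <= Num.floor b + k)%R.
Proof.
move=> hab; rewrite -ltzD1 floor_lt_int.
have := floor_le a; have := floorD1_gt b; rewrite !intrD => h1 h2.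
move: hab; rewrite ltr_norml => /andP[h3 h4]; lra.
Qed.

End Floor.

Section Idx.
Variable R : realType.
Variable d : nat.
Variables o h : R.
Hypothesis Hh : 0 < h.

Definition side (l : nat) : R := h * 2 ^+ l.
Definition idx (l : nat) (x : pt R d) (i : 'I_d) : int := Num.floor ((x i - o) / side l).

Lemma side_gt0 l : 0 < side l.
Proof. by rewrite /side mulr_gt0 // exprn_gt0. Qed.

Lemma sideS l : side l.+1 = side l * 2.
Proof. by rewrite /side exprSr mulrA. Qed.

Lemma side_le l j : (l <= j)%N -> side l <= side j.
Proof. by move=> lj; rewrite /side ler_pM2l // ler_eXn2l // ltr1n. Qed.

Lemma idx_succ l x i : idx l.+1 x i = Num.floor (((x i - o) / side l) / 2).
Proof. by rewrite /idx sideS invfM mulrA. Qed.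

Lemma idx_mono1 l x y : (forall i, idx l x i = idx l y i) ->
  forall i, idx l.+1 x i = idx l.+1 y i.
Proof. by move=> e i; rewrite !idx_succ; apply: floor_half_eq; apply: e. Qed.

Lemma idx_mono l j x y : (l <= j)%N -> (forall i, idx l x i = idx l y i) ->
  forall i, idx j x i = idx j y i.
Proof.
move=> lj; rewrite -(subnK lj); elim: (j - l)%N => [|k IH] e //.
by rewrite addSn; apply: idx_mono1; apply: IH.
Qed.

Lemma idx_bit l x i :
  (idx l x i - 2 * idx l.+1 x i == 0) || (idx l x i - 2 * idx l.+1 x i == 1).
Proof. by rewrite idx_succ; apply: floor_half_bit. Qed.

Lemma idx_close l x y i : idx l x i = idx l y i -> `|x i - y i| < side l.
Proof.
move=> /floor_eq_close; rewrite -mulrBl opprB addrA subrK normrM.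
rewrite (gtr0_norm (x:=(side l)^-1)) ?invr_gt0 ?side_gt0 //.
by rewrite ltr_pdivrMr ?side_gt0 // mul1r.
Qed.

Lemma idx_cube j y i : 
  o + (idx j y i)%:~R * side j <= y i <= o + (idx j y i)%:~R * side j + side j.
Proof.
have s0 := side_gt0 j.
have h1 := floor_le ((y i - o) / side j); have h2 := floorD1_gt ((y i - o) / side j).
rewrite -/(idx j y i) in h1 h2; rewrite intrD in h2.
rewrite ler_pdivlMr // in h1; rewrite ltr_pdivrMr // in h2.
apply/andP; split; lra.
Qed.

Definition rep (b : pt R d) (l : nat) (e : {ffun 'I_d -> 'I_5}) : pt R d :=
  fun i => b i + ((e i)%:R - 2) * side l.

Lemma idx_rep b l e i : idx l (rep b l e) i = idx l b i + (e i)%:Z - 2.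
Proof.
rewrite /idx /rep addrAC mulrDl mulfK ?gt_eqF ?side_gt0 //.
rewrite floorDrz; last by rewrite rpredB // ?rpred_nat // rpred_nat.
have -> : ((e i)%:R - 2 : R) = ((e i)%:Z - 2)%:~R by rewrite intrB.
by rewrite intrKfloor addrA.
Qed.

Lemma cells_cover b l x : (forall i, `|x i - b i| < 2 * side l) ->
  exists e : {ffun 'I_d -> 'I_5}, forall i, idx l x i = idx l (rep b l e) i.
Proof.
move=> hx.
suff : forall i, exists k : 'I_5, idx l x i = idx l b i + (k : nat)%:Z - 2.
  move=> /fin_all_exists [f hf]; exists (finfun f) => i.
  by rewrite idx_rep ffunE hf.
move=> i; have s0 := side_gt0 l.
have c1 : `|(x i - o) / side l - (b i - o) / side l| < (2%:Z)%:~R.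
  rewrite -mulrBl opprB addrA subrK normrM (gtr0_norm (x:=(side l)^-1)) ?invr_gt0 //.
  by rewrite ltr_pdivrMr.
have c2 : `|(b i - o) / side l - (x i - o) / side l| < (2%:Z)%:~R.
  by rewrite distrC.
have f1 := floor_close c1; have f2 := floor_close c2.
rewrite -/(idx l x i) -/(idx l b i) in f1 f2.
have [k [k5 hk]] : exists k : nat, (k < 5)%N /\ idx l x i = idx l b i + k%:Z - 2.
  exists (absz (idx l x i - idx l b i + 2)); lia.
by exists (Ordinal k5).
Qed.

End Idx.


Lemma card_bigcup_le (I T : finType) (F : I -> {set T}) :
  (#|(\bigcup_(i : I) F i)%SET| <= \sum_(i : I) #|F i|)%N.
Proof.
apply: (big_ind2 (fun (A : {set T}) (k : nat) => #|A| <= k)%N) => //.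
- by rewrite cards0.
- move=> A1 k1 A2 k2 h1 h2; apply: leq_trans (leq_card_setU _ _) _.
  exact: leq_add.
Qed.

Section Walk.
Variable n : nat.
Definition Rst (S : {set 'I_n * 'I_n}) (a b : 'I_n) := a = b \/ sadj S a b.
Definition walk3 S u v := exists x1 x2, Rst S u x1 /\ Rst S x1 x2 /\ Rst S x2 v.

Lemma Rst_sym S a b : Rst S a b -> Rst S b a.
Proof. by rewrite /Rst /sadj orbC; case=> [->|]; [left|right]. Qed.

Lemma walk3_sym S u v : walk3 S u v -> walk3 S v u.
Proof.
move=> [x1 [x2 [h1 [h2 h3]]]]; exists x2, x1.
by split; [|split]; apply: Rst_sym.
Qed.

Lemma Rst_sub (S S' : {set 'I_n * 'I_n}) a b : S \subset S' -> Rst S a b -> Rst S' a b.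
Proof.
move=> /fintype.subsetP sub [->|H]; [by left|right].
by move: H; rewrite /sadj => /orP[/sub -> //|/sub ->]; rewrite orbT.
Qed.

Lemma walk3_sub (S S' : {set 'I_n * 'I_n}) u v : S \subset S' -> walk3 S u v -> walk3 S' u v.
Proof.
move=> sub [x1 [x2 [h1 [h2 h3]]]]; exists x1, x2.
by split; [|split]; apply: Rst_sub sub _.
Qed.

Lemma Rst_path S a b s : Rst S a b -> path (sadj S) b s ->
  exists s', (size s' <= (size s).+1)%N /\ path (sadj S) a s' /\ last a s' = last b s.
Proof.
case=> [->|ab] ps; first by exists s; split.
by exists (b :: s); split => //=; rewrite ab.
Qed.

Lemma walk3_path S u v : walk3 S u v ->
  exists s, (size s <= 3)%N /\ path (sadj S) u s /\ last u s = v.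
Proof.
move=> [x1 [x2 [h1 [h2 h3]]]].
have [s3 [z3 [p3 l3]]] := Rst_path (s := [::]) h3 erefl.
have [s2 [z2 [p2 l2]]] := Rst_path h2 p3.
have [s1 [z1 [p1 l1]]] := Rst_path h1 p2.
exists s1; split; last split => //.
  by apply: leq_trans z1 _; apply: leq_trans z2 _; apply: leq_trans z3 _.
by rewrite l1 l2 l3.
Qed.
End Walk.


Section Main.
Variable R : realType.
Variables d c n : nat.
Variable O : 'I_n -> set (pt R d).
Hypothesis Hfat : fat_collection c O.
Variables o h : R.
Hypothesis Hh : 0 < h.
Variable lev : 'I_n -> nat.
Variable b : 'I_n -> pt R d.
Hypothesis Hlev_lo : forall u, 0 < sidelen (O u) -> side h (lev u) <= sidelen (O u).
Hypothesis Hzero : forall u, sidelen (O u) = 0 -> lev u = 0%N.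
Hypothesis Hsep : forall u w x y, O u x -> O w y -> sidelen (O u) = 0 ->
  sidelen (O w) = 0 -> (forall i, idx o h 0 x i = idx o h 0 y i) -> x = y.

Local Notation Cp := ('I_n * {ffun 'I_d -> 'I_5})%type.
Definition yP (P : Cp) : pt R d := rep h (b P.1) (lev P.1) P.2.

Variable J : nat.
Variable y0 : pt R d.
Hypothesis Hroot : forall P : Cp, (lev P.1 <= J)%N /\ forall i, idx o h J (yP P) i = idx o h J y0 i.

Definition inc (P : Cp) (x : pt R d) := forall i, idx o h (lev P.1) x i = idx o h (lev P.1) (yP P) i.
Definition inR j (yR x : pt R d) := forall i, idx o h j x i = idx o h j yR i.
Definition cntset (X : {set Cp}) j yR : {set Cp} :=
  ([set P in X | (lev P.1 <= j)%N && `[< inR j yR (yP P) >]])%SET.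
Definition covers (X : {set Cp}) (S : {set 'I_n * 'I_n}) :=
  forall u v x P Q, igraph_edge O u v -> O u x -> O v x -> P \in X -> Q \in X ->
  P.1 = u -> Q.1 = v -> inc P x -> inc Q x -> walk3 S u v.
Definition okS (S : {set 'I_n * 'I_n}) := forall u v, (u, v) \in S -> igraph_edge O u v.

Lemma covers_small (X : {set Cp}) : (#|X| <= 1)%N -> covers X finset.set0.
Proof.
move=> X1 u v x P Q [uv _] _ _ PX QX Pu Qv _ _; exfalso.
have PQ : P != Q by apply: contraNneq uv => PQ; rewrite -Pu -Qv PQ.
have : (1 < #|X|)%N by apply/card_gt1P; exists P, Q.
by rewrite ltnNge X1.
Qed.

Lemma stab j yR : exists Pt : option 'I_c -> pt R d, forall w, (j <= lev w)%N ->
  (exists z, O w z /\ inR j yR z) -> exists k, O w (Pt k).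
Proof.
have s0 := side_gt0 Hh j.
have [p hp] := Hfat (fun i => o + (idx o h j yR i)%:~R * side h j) (ltW s0).
have [q hq] : exists q : pt R d, forall w z, j = 0%N -> sidelen (O w) = 0 -> O w z ->
    inR j yR z -> z = q.
  case: (pselect (exists w z, j = 0%N /\ sidelen (O w) = 0 /\ O w z /\ inR j yR z)).
    move=> [w0 [z0 [j0 [sw0 [Oz0 iz0]]]]]; exists z0 => w z _ sw Oz iz.
    apply: (Hsep Oz Oz0 sw sw0) => i; rewrite -j0 iz iz0 //.
  move=> nex; exists yR => w z j0 sw Oz iz; exfalso; apply: nex.
  by exists w, z.
exists (fun k => if k is Some k then p k else q).
move=> w jw [z [Owz iz]].
have [sw|sw] := eqVneq (sidelen (O w)) 0.
  have j0 : j = 0%N by move: jw; rewrite Hzero // leqn0 => /eqP.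
  by exists None; rewrite -(hq w z).
have swp : 0 < sidelen (O w) by rewrite lt_neqAle eq_sym sw sidelen_ge0.
have hne : O w `&` cube (fun i => o + (idx o h j yR i)%:~R * side h j) (side h j) !=set0.
  exists z; split => // i; rewrite -(iz i); exact: idx_cube.
have hl : side h j <= sidelen (O w).
  apply: le_trans (Hlev_lo swp); exact: side_le.
have [k hk] := hp w hne hl.
by exists (Some k).
Qed.


Lemma descend (X : {set Cp}) (N mm : nat) j yR : (N < mm * #|cntset X j yR|)%N ->
  exists j' yR', (N < mm * #|cntset X j' yR'|)%N /\
    forall y, (0 < j')%N -> inR j' yR' y -> (mm * #|cntset X j'.-1 y| <= N)%N.
Proof.
elim: j yR => [|j IH] yR hb; first by exists 0%N, yR.
case: (pselect (exists y, inR j.+1 yR y /\ (N < mm * #|cntset X j y|)%N)).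
  by move=> [y [_ hy]]; apply: IH hy.
move=> nex; exists j.+1, yR; split => // y _ iy.
rewrite leqNgt; apply/negP => hy; apply: nex; by exists y.
Qed.

Lemma step_edges (X : {set Cp}) j yR : exists S, okS S /\ (#|S| <= 2 * c.+1 * #|X|)%N /\
  forall w y, (j <= lev w)%N -> (exists z, O w z /\ inR j yR z) ->
  (exists P, P \in X /\ P.1 = w) -> (exists P, P \in X /\ P.1 = y) ->
  igraph_edge O y w -> walk3 S y w.
Proof.
have [Pt hPt] := stab j yR.
pose Objs := ([set P.1 | P in X])%SET.
pose Big := ([set w in Objs | (j <= lev w)%N && `[< exists z, O w z /\ inR j yR z >]])%SET.
pose K k := ([set w in Big | `[< O w (Pt k) >]])%SET.
pose Zk k := [pick z in K k].
pose Ak k y := [pick a | `[< igraph_edge O y a /\ a \in K k >]].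
pose S := ([set e : 'I_n * 'I_n | `[< exists k, (e.1 \in Objs /\ Ak k e.1 = Some e.2) \/
   (Zk k = Some e.1 /\ e.2 \in K k /\ e.1 != e.2) >]])%SET.
have KP k w : w \in K k -> O w (Pt k).
  by rewrite inE => /andP[_ /asboolP].
exists S; split; [|split].
- move=> u v; rewrite inE => /asboolP [k [[_ /= hA]|[/= hZ [vK uv]]]].
    by move: hA; rewrite /Ak; case: pickP => // a /asboolP [e _] [<-].
  move: hZ uv; rewrite /Zk; case: pickP => // z zK [<-] zv.
  split => //; exists (Pt k); split; [exact: KP zK | exact: KP vK].
- have sub : S \subset (\bigcup_(k : option 'I_c)
     ([set (y, odflt y (Ak k y)) | y in Objs] :|: [set (odflt w (Zk k), w) | w in K k]))%SET.
    apply/fintype.subsetP => -[u v]; rewrite inE => /asboolP [k hk].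
    apply/bigcupP; exists k => //; rewrite inE; apply/orP.
    case: hk => [[/= uO hA]|[/= hZ [vK _]]].
      by left; apply/imsetP; exists u => //; rewrite hA.
    by right; apply/imsetP; exists v => //; rewrite hZ.
  apply: leq_trans (subset_leq_card sub) _.
  apply: leq_trans (card_bigcup_le _) _.
  have hO : (#|Objs| <= #|X|)%N by apply: leq_imset_card.
  have hK k : (#|K k| <= #|X|)%N.
    apply: leq_trans hO; apply: subset_leq_card; apply/fintype.subsetP => w.
    by rewrite !inE => /andP[/andP[-> _] _].
  have hk (k : option 'I_c) : (#|([set (y, odflt y (Ak k y)) | y in Objs] :|:
        [set (odflt w (Zk k), w) | w in K k])%SET| <= 2 * #|X|)%N.
    apply: leq_trans (leq_card_setU _ _) _; rewrite mul2n -addnn; apply: leq_add.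
    - exact: leq_trans (leq_imset_card _ _) hO.
    - exact: leq_trans (leq_imset_card _ _) (hK k).
  apply: (@leq_trans (\sum_(k : option 'I_c) 2 * #|X|)%N).
    by apply: leq_sum => k _; apply: hk.
  by rewrite sum_nat_const card_option card_ord; lia.
- move=> w y jw [z [Owz iz]] [P [PX Pw]] [Q [QX Qy]] yw.
  have wB : w \in Big.
    rewrite inE; apply/andP; split; first by apply/imsetP; exists P.
    by rewrite jw /=; apply/asboolP; exists z.
  have [k wk] := hPt w jw (ex_intro _ z (conj Owz iz)).
  have wK : w \in K k by rewrite inE wB /=; apply/asboolP.
  have yO : y \in Objs by apply/imsetP; exists Q.
  case hZ : (Zk k) => [zz|]; last first.
    by move: hZ; rewrite /Zk; case: pickP => // /(_ w); rewrite wK.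
  case hA : (Ak k y) => [a|]; last first.
    move: hA; rewrite /Ak; case: pickP => // /(_ w) /asboolP; by case.
  have [ya aK] : igraph_edge O y a /\ a \in K k.
    by move: hA; rewrite /Ak; case: pickP => // a' /asboolP hh [<-].
  have zK : zz \in K k by move: hZ; rewrite /Zk; case: pickP => // z' hz [<-].
  exists a, zz; split; [|split].
  + right; rewrite /sadj inE; apply/orP; left; apply/asboolP; exists k; left; by split.
  + have [->|az] := eqVneq a zz; first by left.
    right; rewrite /sadj orbC inE; apply/orP; left; apply/asboolP; exists k; right.
    by split => //; split => //; rewrite eq_sym.
  + have [->|zw] := eqVneq zz w; first by left.
    right; rewrite /sadj inE; apply/orP; left; apply/asboolP; exists k; right.
    by split.
Qed.


Lemma main_rec D : forall X : {set Cp}, (#|X| * (2 ^ d) ^ D <= (2 ^ d).+1 ^ D)%N ->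
  exists S, okS S /\ covers X S /\ (#|S| <= 2 * c.+1 * #|X| * D)%N.
Proof.
set m := (2 ^ d)%N.
have ok0 : okS finset.set0 by move=> u v; rewrite inE.
elim: D => [|D IH] X hX.
  exists finset.set0; split => //; split; last by rewrite cards0.
  by apply: covers_small; move: hX; rewrite !expn0 muln1.
have [X1|X2] := leqP #|X| 1.
  exists finset.set0; split => //; split; last by rewrite cards0.
  exact: covers_small.
have root : cntset X J y0 = X.
  apply/setP => P; rewrite inE; case PX: (P \in X) => //=.
  have [h1 h2] := Hroot P; rewrite h1 /=; apply/asboolP => i; exact: h2.
have hb : (#|X| < m.+1 * #|cntset X J y0|)%N by rewrite root; nia.
have [j [yR [hbig hmin]]] := descend hb.
have [S0 [okS0 [card0 hand]]] := step_edges X j yR.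
pose Cs := cntset X j yR.
pose In := [set P in X | (lev P.1 < j)%N && `[< inR j yR (yP P) >]]%SET.
pose Out := [set P in X | (P \notin Cs) &&
   ~~ `[< (j <= lev P.1)%N /\ exists z, O P.1 z /\ inR j yR z >]]%SET.
have CsX : Cs \subset X by apply/fintype.subsetP => P; rewrite inE => /andP[].
have InCs : In \subset Cs.
  apply/fintype.subsetP => P; rewrite !inE => /andP[-> /andP[lj ->]].
  by rewrite ltnW.
have OutCs : (#|Out| <= #|X| - #|Cs|)%N.
  have -> : (#|X| - #|Cs| = #|X :\: Cs|)%N by rewrite cardsD (finset.setIidPr CsX).
  apply: subset_leq_card; apply/fintype.subsetP => P; rewrite !inE.
  by case/andP => -> /andP[-> _].
have Outb : (m.+1 * #|Out| <= m * #|X|)%N.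
  have := subset_leq_card CsX; rewrite -/Cs in hbig; nia.
have Inb : (m.+1 * #|In| <= m * #|X|)%N.
  case: (posnP j) => [j0|jpos].
    have -> : In = finset.set0.
      by apply/setP => P; rewrite !inE j0 ltn0 andbF.
    by rewrite cards0 muln0.
  pose G (be : {ffun 'I_d -> bool}) := [set P in In | [forall i,
     idx o h j.-1 (yP P) i == 2 * idx o h j (yP P) i + (be i : nat)%:Z]]%SET.
  have InG : In \subset (\bigcup_(be : {ffun 'I_d -> bool}) G be)%SET.
    apply/fintype.subsetP => P PIn; apply/bigcupP.
    exists [ffun i => idx o h j.-1 (yP P) i - 2 * idx o h j (yP P) i == 1] => //.
    rewrite inE PIn /=; apply/forallP => i; rewrite ffunE.
    have := idx_bit o h j.-1 (yP P) i; rewrite prednK //.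
    case/orP => /eqP e; rewrite e /=; apply/eqP; lia.
  have Gb be : (m.+1 * #|G be| <= #|X|)%N.
    case: (set_0Vmem (G be)) => [->|[P0 P0G]]; first by rewrite cards0 muln0.
    have P0In : P0 \in In by move: P0G; rewrite inE => /andP[].
    have iP0 : inR j yR (yP P0) by move: P0In; rewrite inE => /andP[_ /andP[_ /asboolP]].
    apply: leq_trans (hmin (yP P0) jpos iP0); rewrite leq_mul2l; apply/orP; right.
    apply: subset_leq_card; apply/fintype.subsetP => P PG.
    move: (PG); rewrite inE => /andP[PIn /forallP hP].
    move: (P0G); rewrite inE => /andP[_ /forallP hP0].
    move: PIn; rewrite inE => /andP[PX /andP[lP /asboolP iP]].
    rewrite inE PX /= -ltnS prednK // lP /=; apply/asboolP => i.
    by rewrite (eqP (hP i)) (eqP (hP0 i)) iP iP0.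
  have hsum : (#|In| <= \sum_(be : {ffun 'I_d -> bool}) #|G be|)%N.
    exact: leq_trans (subset_leq_card InG) (card_bigcup_le _).
  apply: (@leq_trans (m.+1 * \sum_(be : {ffun 'I_d -> bool}) #|G be|)%N).
    by rewrite leq_mul2l hsum orbT.
  rewrite big_distrr /=.
  apply: (@leq_trans (\sum_(be : {ffun 'I_d -> bool}) #|X|)%N).
    by apply: leq_sum => be _; apply: Gb.
  by rewrite sum_nat_const card_ffun card_bool card_ord.
have hIn : (#|In| * m ^ D <= m.+1 ^ D)%N.
  move: hX; rewrite !expnS; set a := (m ^ D)%N; set bb := (m.+1 ^ D)%N => hX; nia.
have hOut : (#|Out| * m ^ D <= m.+1 ^ D)%N.
  move: hX; rewrite !expnS; set a := (m ^ D)%N; set bb := (m.+1 ^ D)%N => hX; nia.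
have [S1 [okS1 [cov1 card1]]] := IH In hIn.
have [S2 [okS2 [cov2 card2]]] := IH Out hOut.
have sub0 : S0 \subset (S0 :|: S1 :|: S2)%SET by rewrite -finset.setUA finset.subsetUl.
have sub1 : S1 \subset (S0 :|: S1 :|: S2)%SET by rewrite -finset.setUA finset.setUCA finset.subsetUl.
have sub2 : S2 \subset (S0 :|: S1 :|: S2)%SET by rewrite finset.subsetUr.
exists (S0 :|: S1 :|: S2)%SET; split; [|split].
- move=> u v; rewrite !inE => /orP[/orP[]|]; [exact: okS0|exact: okS1|exact: okS2].
- move=> u v x P Q uv Ox Ox' PX QX Pu Qv iP iQ.
  have hu : (exists P', P' \in X /\ P'.1 = u) by exists P.
  have hv : (exists P', P' \in X /\ P'.1 = v) by exists Q.
  have vu : igraph_edge O v u.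
    by case: uv => uv [z [z1 z2]]; split; [rewrite eq_sym|exists z].
  case: (pselect ((j <= lev u)%N /\ exists z, O u z /\ inR j yR z)) => [[ju zu]|nu].
    by apply: walk3_sym; apply: walk3_sub sub0 _; apply: hand.
  case: (pselect ((j <= lev v)%N /\ exists z, O v z /\ inR j yR z)) => [[jv zv]|nv].
    by apply: walk3_sub sub0 _; apply: hand.
  case: (pselect (inR j yR x)) => xR.
    have lu : (lev u < j)%N.
      rewrite ltnNge; apply/negP => ju; apply: nu; split => //; by exists x.
    have lv : (lev v < j)%N.
      rewrite ltnNge; apply/negP => jv; apply: nv; split => //; by exists x.
    apply: walk3_sub sub1 _; apply: (cov1 u v x P Q) => //.
      rewrite inE PX /= Pu lu /=; apply/asboolP => i.
      rewrite -(xR i); apply: esym; apply: idx_mono (ltnW lu) _ i.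
      by rewrite -Pu; exact: iP.
    rewrite inE QX /= Qv lv /=; apply/asboolP => i.
    rewrite -(xR i); apply: esym; apply: idx_mono (ltnW lv) _ i.
    by rewrite -Qv; exact: iQ.
  apply: walk3_sub sub2 _; apply: (cov2 u v x P Q) => //.
    rewrite inE PX /= Pu; apply/andP; split; last by apply/asboolP.
    rewrite inE PX /= Pu; apply/negP => /andP[lu /asboolP iu]; apply: xR => i.
    rewrite -(iu i); apply: idx_mono lu _ i; rewrite -Pu; exact: iP.
  rewrite inE QX /= Qv; apply/andP; split; last by apply/asboolP.
  rewrite inE QX /= Qv; apply/negP => /andP[lv /asboolP iv]; apply: xR => i.
  rewrite -(iv i); apply: idx_mono lv _ i; rewrite -Qv; exact: iQ.
- apply: leq_trans (leq_card_setU _ _) _.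
  apply: leq_trans (leq_add (leq_card_setU _ _) (leqnn _)) _.
  have := subset_leq_card InCs; nia.
Qed.

End Main.


Section Aux.
Variable R : realType.

Lemma term_le_sum (I : finType) (F : I -> R) i : (forall j, 0 <= F j) -> F i <= \sum_j F j.
Proof.
move=> F0; rewrite (bigD1 i) //= lerDl; exact: sumr_ge0.
Qed.

Lemma pos_lb (I : finType) (f : I -> R) : exists h : R, 0 < h /\ forall i, 0 < f i -> h <= f i.
Proof.
pose g i := if 0 < f i then (f i)^-1 else 0.
have g0 i : 0 <= g i by rewrite /g; case: ifP => // fi; rewrite invr_ge0 ltW.
have s0 : 0 < 1 + \sum_i g i by apply: ltr_pwDl => //; exact: sumr_ge0.
exists (1 + \sum_i g i)^-1; split; first by rewrite invr_gt0.
move=> i fi; rewrite -[f i]invrK lef_pV2 ?posrE ?invr_gt0 //.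
have : g i = (f i)^-1 by rewrite /g fi.
move=> <-; apply: le_trans (term_le_sum i g0) _; rewrite lerDr //.
Qed.

Lemma level_ex (h s : R) : 0 < h -> h <= s ->
  exists l : nat, side h l <= s /\ s < side h l.+1.
Proof.
move=> h0 hs.
have ex : exists l, side h l <= s by exists 0%N; rewrite /side expr0 mulr1.
have bd : forall l, side h l <= s -> (l <= Num.bound (s / h))%N.
  move=> l hl; have := archi_boundP (x := s / h) (divr_ge0 (le_trans (ltW h0) hs) (ltW h0)).
  move=> hb; rewrite -(ler_nat R); apply: ltW; apply: le_lt_trans hb.
  rewrite ler_pdivlMr //; apply: le_trans hl; rewrite /side mulrC ler_pM2l //.
  rewrite -natrX ler_nat; apply: ltnW; exact: ltn_expl.
have [l hl hmax] := ex_maxnP ex bd.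
exists l; split => //; rewrite ltNge; apply/negP => hl1.
by have := hmax _ hl1; rewrite ltnn.
Qed.

End Aux.

Section Build.
Variable R : realType.
Variables d c n : nat.
Variable O : 'I_n -> set (pt R d).
Hypothesis Hbd : forall i, bounded_obj (O i).
Hypothesis Hfat : fat_collection c O.

Lemma build D : (n * 5 ^ d * (2 ^ d) ^ D <= (2 ^ d).+1 ^ D)%N ->
  exists S : {set 'I_n * 'I_n}, okS O S /\ (forall u v, igraph_edge O u v -> walk3 S u v) /\
    (#|S| <= 2 * c.+1 * (n * 5 ^ d) * D)%N.
Proof.
move=> hD.
have : forall u : 'I_n, exists bu : pt R d, O u !=set0 -> O u bu.
  move=> u; case: (pselect (O u !=set0)) => [[x Ox]|ne]; first by exists x.
  by exists (fun _ => 0) => /ne.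
move=> /fin_all_exists [b hb].
pose f (t : ('I_n + ('I_n * 'I_n * 'I_d))%type) : R :=
  match t with inl u => sidelen (O u) | inr (u, w, i) => `|b u i - b w i| end.
have [h [h0 hf]] := pos_lb f.
have : forall u : 'I_n, exists l : nat,
    sidelen (O u) < 2 * side h l /\
    (0 < sidelen (O u) -> side h l <= sidelen (O u)) /\
    (sidelen (O u) = 0 -> l = 0%N).
  move=> u.
  have [s0|spos] := eqVneq (sidelen (O u)) 0.
    exists 0%N; rewrite s0 ltxx; split => //.
    by rewrite /side expr0 mulr1 mulr_gt0.
  have sp : 0 < sidelen (O u) by rewrite lt_neqAle eq_sym spos sidelen_ge0.
  have [l [l1 l2]] := level_ex h0 (hf (inl u) sp).
  exists l; split; first by rewrite sideS mulrC in l2.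
  by split => // s0; move: spos; rewrite s0 eqxx.
move=> /fin_all_exists [lev hlev].
pose yy := yP h lev b.
pose B : R := 1 + \sum_(P : ('I_n * {ffun 'I_d -> 'I_5})%type) \sum_(i : 'I_d) `|yy P i|.
have yB P i : `|yy P i| + 1 <= B.
  rewrite /B addrC lerD2l.
  apply: le_trans (term_le_sum P (F := fun P => \sum_i `|yy P i|) _).
    exact: (term_le_sum i (F := fun i => `|yy P i|)).
  by move=> P'; apply: sumr_ge0.
have B1 : 1 <= B by rewrite /B lerDl; apply: sumr_ge0 => P _; apply: sumr_ge0.
have [K0 hK0] : exists K0 : nat, 2 * B / h < K0%:R.
  exists (Num.bound (2 * B / h)); apply: archi_boundP.
  by rewrite divr_ge0 ?(ltW h0) // mulr_ge0 //; lra.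
pose J := (\max_u lev u + K0)%N.
have sJ : 2 * B < side h J.
  apply: lt_le_trans (side_le h0 (leq_addl _ K0 : (K0 <= J)%N)).
  rewrite /side; move: hK0; rewrite ltr_pdivrMr // => hK0.
  apply: lt_le_trans hK0 _; rewrite mulrC ler_pM2l // -natrX ler_nat.
  by apply: ltnW; apply: ltn_expl.
have idx0 (z : pt R d) i : `|z i| + 1 <= B -> idx (- B) h J z i = 0.
  move=> zb; rewrite /idx; apply: floor_def; rewrite add0r.
  have s0 := side_gt0 h0 J.
  have h1 := ler_norm (z i).
  have h2 : - z i <= `|z i| by rewrite -normrN ler_norm.
  apply/andP; split.
    rewrite divr_ge0 ?(ltW s0) //; lra.
  rewrite ltr_pdivrMr // mul1r; lra.
have root : forall P : ('I_n * {ffun 'I_d -> 'I_5})%type, (lev P.1 <= J)%N /\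
    forall i, idx (- B) h J (yP h lev b P) i = idx (- B) h J (fun _ => 0) i.
  move=> P; split.
    by rewrite /J; apply: (leq_trans _ (leq_addr K0 _)); apply: leq_bigmax.
  by move=> i; rewrite !idx0 // normr0 add0r.
have Hlo u : 0 < sidelen (O u) -> side h (lev u) <= sidelen (O u).
  by have [_ [? _]] := hlev u.
have Hz u : sidelen (O u) = 0 -> lev u = 0%N by have [_ [_ ?]] := hlev u.
have Hsep u w x y : O u x -> O w y -> sidelen (O u) = 0 -> sidelen (O w) = 0 ->
    (forall i, idx (- B) h 0 x i = idx (- B) h 0 y i) -> x = y.
  move=> Ox Oy su sw e; apply: funext => i.
  have xb : x i = b u i.
    have := sidelen_diff (Hbd u) Ox (hb u (ex_intro _ x Ox)) i.
    by rewrite su normr_le0 subr_eq0 => /eqP.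
  have yb : y i = b w i.
    have := sidelen_diff (Hbd w) Oy (hb w (ex_intro _ y Oy)) i.
    by rewrite sw normr_le0 subr_eq0 => /eqP.
  have cl := idx_close h0 (e i); rewrite /side expr0 mulr1 in cl.
  case: (eqVneq (x i) (y i)) => // ne; exfalso.
  have pos : 0 < f (inr (u, w, i)) by rewrite /= -xb -yb normr_gt0 subr_eq0.
  by have := hf _ pos; rewrite /= -xb -yb leNgt cl.
have hX : (#|([set: ('I_n * {ffun 'I_d -> 'I_5})%type])%SET| * (2 ^ d) ^ D <= (2 ^ d).+1 ^ D)%N.
  by rewrite cardsT card_prod card_ffun !card_ord.
have [S [okS0 [cov cardS]]] := main_rec Hfat h0 Hlo Hz Hsep root hX.
exists S; split => //; split; last first.
  by move: cardS; rewrite cardsT card_prod card_ffun !card_ord.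
move=> u v uv; have [_ [x [Oux Ovx]]] := uv.
have cov1 w z : O w z -> exists e : {ffun 'I_d -> 'I_5},
    inc (- B) h lev b (w, e) z.
  move=> Oz.
  have hcl : forall i, `|z i - b w i| < 2 * side h (lev w).
    move=> i; apply: le_lt_trans (sidelen_diff (Hbd w) Oz (hb w (ex_intro _ z Oz)) i) _.
    by have [? _] := hlev w.
  have [e he] := cells_cover (- B) h0 hcl.
  by exists e.
have [eu hu] := cov1 u x Oux; have [ev hv] := cov1 v x Ovx.
by apply: (cov u v x (u, eu) (v, ev)) => //; rewrite inE.
Qed.

End Build.


Lemma bern (m k : nat) : (m ^ k * (m + k) <= m.+1 ^ k * m)%N.
Proof.
elim: k => [|k IH]; first by rewrite !expn0 addn0.
rewrite !expnS; set a := (m ^ k)%N; set bb := (m.+1 ^ k)%N in IH *; nia.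
Qed.

Lemma bern2 (m : nat) : (0 < m)%N -> (2 * m ^ m <= m.+1 ^ m)%N.
Proof.
move=> m0; have := bern m m; set a := (m ^ m)%N; set bb := (m.+1 ^ m)%N; nia.
Qed.

Lemma nat_bound (n d D' : nat) : (2 <= n)%N -> (1 <= d)%N ->
  D' = (3 * d + trunc_log 2 n + 1)%N ->
  (n * 5 ^ d * (2 ^ d) ^ (2 ^ d * D') <= (2 ^ d).+1 ^ (2 ^ d * D'))%N.
Proof.
move=> n2 d1 eD.
set m := (2 ^ d)%N.
have m0 : (0 < m)%N by rewrite expn_gt0.
have D0 : (0 < D')%N by rewrite eD addn1.
have hn : (n * 5 ^ d <= 2 ^ D')%N.
  rewrite eD -addnA expnD mulnC; apply: leq_mul.
    rewrite expnM; apply: leq_trans (_ : 5 ^ d <= 8 ^ d)%N _ => //.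
    by rewrite leq_exp2r.
  by rewrite addn1; apply: ltnW; apply: trunc_log_ltn.
rewrite !expnM.
apply: (@leq_trans ((2 * m ^ m) ^ D')).
  by rewrite expnMn leq_mul2r hn orbT.
by rewrite leq_exp2r //; apply: bern2.
Qed.

Lemma real_bound (R : realType) (n d l : nat) (a : R) : (2 <= n)%N -> (2 ^ l <= n)%N -> 0 <= a ->
  a * n%:R * (3 * d + l + 1)%:R <= a * (3 * d + 2)%:R / ln 2 * n%:R * ln n%:R.
Proof.
move=> n2 hln a0.
have l2 : 0 < ln (2 : R) by apply: ln_gt0; rewrite ltr1n.
have n0 : (0 : R) < n%:R by rewrite ltr0n; lia.
have L2 : ln (2 : R) <= ln n%:R.
  by rewrite ler_ln ?posrE ?ltr0n // ?ler_nat //; lia.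
have Ll : l%:R * ln (2 : R) <= ln n%:R.
  have : ln ((2 : R) ^+ l) <= ln n%:R.
    by rewrite ler_ln ?posrE ?exprn_gt0 // -natrX ler_nat.
  by rewrite lnXn // mulr_natl.
have key : (3 * d + l + 1)%:R <= (3 * d + 2)%:R / ln 2 * ln (n%:R : R).
  rewrite mulrAC ler_pdivlMr // !natrD.
  have dd : (0 : R) <= d%:R by [].
  have Lp : 0 <= ln (n%:R : R) by lra.
  nra.
have -> : a * (3 * d + 2)%:R / ln 2 * n%:R * ln n%:R =
   (a * n%:R) * ((3 * d + 2)%:R / ln 2 * ln (n%:R : R)) by ring.
by rewrite ler_wpM2l // mulr_ge0 // ltW.
Qed.

Theorem theorem11 (R : realType) (d c : nat) :
  (1 <= d)%N -> (1 <= c)%N ->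
  exists K : R, 0 < K /\
    forall (n : nat) (O : 'I_n -> set (pt R d)),
      (forall i, bounded_obj (O i)) ->
      fat_collection c O ->
      exists S : {set 'I_n * 'I_n},
        hop_spanner O 3 S /\ (#|S|%:R <= K * n%:R * ln n%:R).
Proof.
move=> d1 c1.
pose a : R := (2 * c.+1 * 5 ^ d * 2 ^ d)%N%:R.
have a0 : 0 < a by rewrite /a ltr0n !muln_gt0 !expn_gt0.
exists (a * (3 * d + 2)%:R / ln 2); split.
  rewrite divr_gt0 ?mulr_gt0 ?ltr0n ?addn_gt0 ?orbT ?muln_gt0 ?expn_gt0 //.
  by apply: ln_gt0; rewrite ltr1n.
move=> n O Hbd Hfat.
case: (leqP n 1) => [n1|n2].
  exists finset.set0; split.
    split; first by move=> u v; rewrite inE.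
    move=> u v [uv _]; exfalso; move/negP: uv; apply; apply/eqP; apply: ord_inj.
    have := ltn_ord u; have := ltn_ord v; lia.
  rewrite cards0.
  have [->|->] : n = 0%N \/ n = 1%N by lia.
    by rewrite mulr0 mul0r.
  by rewrite ln1 mulr0.
pose l := trunc_log 2 n.
pose D' := (3 * d + l + 1)%N.
have hD := nat_bound n2 d1 (erefl D').
have [S [okS0 [wk cardS]]] := build Hbd Hfat hD.
exists S; split.
  split; first exact: okS0.
  by move=> u v uv; apply: walk3_path; apply: wk.
have cS : (#|S| <= (2 * c.+1 * 5 ^ d * 2 ^ d) * n * D')%N.
  by apply: leq_trans cardS _; rewrite /D' !mulnA; nia.
apply: le_trans (_ : ((2 * c.+1 * 5 ^ d * 2 ^ d) * n * D')%N%:R <= _).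
  by rewrite ler_nat.
rewrite natrM [X in X * _ <= _]natrM /D'.
apply: real_bound => //.
  by apply: trunc_logP; lia.
Qed.
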